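(* Let $\alpha\ge1$ and $0<\theta,b\le1$. Let $\nu,\mu$ be the Gibbs distributions of two Ising models $(G,J^\nu,h^\nu)$ and $(G,J^\mu,h^\mu)$ on $G=(V,E)$. If $d_{\mathrm{par}}(\nu,\mu)\ge\theta$ and both $\nu$ and $\mu$ are $b$-marginally bounded, then $$D_{\chi^\alpha}(\nu\|\mu)\ \ge\ B_{\alpha,b}(\theta)\sum_{\sigma\in\{-1,+1\}^V}\mu(\sigma)\left(\frac{\nu(\sigma)}{\mu(\sigma)}+1\right)^\alpha,$$ where, writing $s=\left(\frac{b^{2\alpha}\theta^\alpha}{2}\right)^{1/(\alpha+1)}$, $$B_{\alpha,b}(\theta)=\frac{b^{2\alpha}\theta^\alpha}{2}\,(s+2)^{-\alpha}\,(2s+1)^{-1}.$$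
   Context: An Ising model $(G,J,h)$ on $G=(V,E)$ consists of a symmetric $J\in\mathbb{R}^{V\times V}$ with $J_{uv}\ne0$ only if $\{u,v\}\in E$, and $h\in\mathbb{R}^V$; its Gibbs distribution on $\{-1,+1\}^V$ is $\mu(\sigma)\propto\exp(\tfrac12\sigma^TJ\sigma+h^T\sigma)$. The $\chi^\alpha$-divergence is $D_{\chi^\alpha}(\nu\|\mu)=\sum_\sigma\mu(\sigma)\cdot\frac12\left|\frac{\nu(\sigma)}{\mu(\sigma)}-1\right|^\alpha$. The parameter distance is $d_{\mathrm{par}}(\nu,\mu)=\max\left\{\max_{u,v}|J^\nu_{uv}-J^\mu_{uv}|,\ \max_{v\in V}\frac{|h^\nu(v)-h^\mu(v)|}{\deg(v)+1}\right\}$. $\mu$ is $b$-marginally bounded if for every $\Lambda\subseteq V$, pinning $\sigma\in\{-1,+1\}^\Lambda$, $v\notin\Lambda$, $c\in\{-1,+1\}$, the conditional marginal probability that $v$ takes value $c$ given $\sigma$ on $\Lambda$ is at least $b$. *)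

(* Defs.v *)
From HB Require Import structures.
From mathcomp Require Import all_boot all_order all_algebra.
From mathcomp Require Import all_classical all_reals all_analysis.
Set Implicit Arguments. Unset Strict Implicit. Unset Printing Implicit Defensive.
Import Order.TTheory GRing.Theory Num.Theory.
Local Open Scope ring_scope.

Section Ising.
Variables (R : realType) (V : finType).

(* spin configurations {-1,+1}^V, encoded as boolean functions (true = +1) *)
Definition config := {ffun V -> bool}.
Definition spin (s : config) (v : V) : R := if s v then 1 else -1.

Definition simple_graph (E : rel V) := symmetric E /\ irreflexive E.

Definition is_ising (E : rel V) (J : V -> V -> R) (h : V -> R) :=
  (forall u v, J u v = J v u) /\ (forall u v, J u v != 0 -> E u v).

Definition ising_weight (J : V -> V -> R) (h : V -> R) (s : config) : R :=
  expR (2^-1 * (\sum_u \sum_v J u v * spin s u * spin s v)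
        + \sum_v h v * spin s v).

Definition gibbs (J : V -> V -> R) (h : V -> R) (s : config) : R :=
  ising_weight J h s / \sum_t ising_weight J h t.

Definition chi_div (alpha : R) (nu mu : config -> R) : R :=
  \sum_s mu s * (2^-1 * (`| nu s / mu s - 1 | `^ alpha)).

Definition deg (E : rel V) (v : V) : nat := #|[set u | E v u]|.

Definition dpar (E : rel V) (Jn : V -> V -> R) (hn : V -> R)
    (Jm : V -> V -> R) (hm : V -> R) : R :=
  Num.max (\big[Num.max/0]_u \big[Num.max/0]_v `|Jn u v - Jm u v|)
          (\big[Num.max/0]_v (`|hn v - hm v| / (deg E v).+1%:R)).

Definition agree (L : {set V}) (tau s : config) : bool :=
  [forall v in L, s v == tau v].

Definition cond_marg (mu : config -> R) (L : {set V}) (tau : config)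
    (v : V) (c : bool) : R :=
  (\sum_(s | agree L tau s && (s v == c)) mu s) /
  (\sum_(s | agree L tau s) mu s).

Definition marg_bounded (mu : config -> R) (b : R) :=
  forall (L : {set V}) (tau : config) (v : V) (c : bool),
    v \notin L -> b <= cond_marg mu L tau v c.

End Ising.

Definition Bconst (R : realType) (alpha b theta : R) : R :=
  let a := b `^ (2 * alpha) * theta `^ alpha / 2 in
  let s := a `^ (1 / (alpha + 1)) in
  a * (s + 2) `^ (- alpha) * (2 * s + 1)^-1.

(* Main.v *)
Require Import Defs.
From HB Require Import structures.
From mathcomp Require Import all_boot all_order all_algebra.
From mathcomp Require Import all_classical all_reals all_analysis.
From mathcomp Require Import ring lra.
Import Order.TTheory GRing.Theory Num.Theory.
Local Open Scope ring_scope.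
Lemma tangent_powR (R : realType) (al tau x : R) :
  1 <= al -> 0 < tau -> 0 <= x ->
  al * tau `^ (al - 1) * x - (al - 1) * tau `^ al <= x `^ al.
Proof.
move=> al1 tau0 x0.
have [->|alne1] := eqVneq al 1.
  rewrite subrr powRr0 (powRr1 x0) (powRr1 (ltW tau0)); lra.
have al1' : 1 < al by rewrite lt_neqAle eq_sym alne1.
have al0 : 0 < al by exact: (lt_le_trans ltr01 al1).
pose q := al / (al - 1).
have am0 : 0 < al - 1 by rewrite subr_gt0.
have q0 : 0 < q by rewrite divr_gt0.
have pq : al^-1 + q^-1 = 1.
  rewrite /q invf_div; field; rewrite gt_eqF //.
have Y := conjugate_powR x0 (powR_ge0 tau (al - 1)) al0 q0 pq.
have E : (tau `^ (al - 1)) `^ q = tau `^ al.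
  rewrite -powRrM /q; congr (_ `^ _); field; rewrite gt_eqF //.
rewrite E in Y.
have : al * (x * tau `^ (al - 1)) <= al * (x `^ al / al + tau `^ al / q).
  by rewrite ler_pM2l.
have -> : al * (x `^ al / al + tau `^ al / q) = x `^ al + (al - 1) * tau `^ al.
  rewrite /q; field; rewrite !gt_eqF //.
move=> H; lra.
Qed.

Lemma core1 (R : realType) (p q b D : R) :
  0 < p -> 0 < 1 - p -> 0 < 1 - q -> 0 < q -> b <= p -> b <= 1 - q -> 0 < b -> 0 <= D ->
  q * (1 - p) = p * (1 - q) * expR (2 * D) -> b * D <= `|q - p|.
Proof.
move=> p0 p1 q1 q0 bp bq b0 D0 E.
pose A := q / p. pose B := (1 - p) / (1 - q).
have A0 : 0 <= A by rewrite divr_ge0 // ltW.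
have EAB : expR (2 * D) = A * B.
  rewrite /A /B; apply: (@mulfI _ (p * (1 - q))); first by rewrite mulf_neq0 // gt_eqF.
  rewrite -E; field; rewrite !gt_eqF //.
have HA : A <= expR (A - 1) by have := expR_ge1Dx (A - 1); rewrite addrC subrK.
have HB : B <= expR (B - 1) by have := expR_ge1Dx (B - 1); rewrite addrC subrK.
have H : 2 * D <= (A - 1) + (B - 1).
  rewrite -ler_expR expRD EAB; apply: ler_pM => //; rewrite /B divr_ge0 // ltW //.
have eA : A - 1 = (q - p) / p by rewrite /A; field; rewrite gt_eqF.
have eB : B - 1 = (q - p) / (1 - q) by rewrite /B; field; rewrite gt_eqF.
rewrite eA eB in H.
have [tp|tn] := lerP 0 (q - p).
  have h1 : (q - p) / p <= (q - p) / b.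
    by rewrite ler_wpM2l // lef_pV2 // posrE // (lt_le_trans b0).
  have h2 : (q - p) / (1 - q) <= (q - p) / b.
    by rewrite ler_wpM2l // lef_pV2 // posrE.
  have h3 : 2 * D <= 2 * ((q - p) / b) by lra.
  have h4 : D <= (q - p) / b by lra.
  rewrite ger0_norm //; by rewrite mulrC -ler_pdivlMr.
have h1 : (q - p) / p < 0 by rewrite ltr_pdivrMr // mul0r.
have h2 : (q - p) / (1 - q) < 0 by rewrite ltr_pdivrMr // mul0r.
lra.
Qed.
Lemma pair_pos (R : realType) (b D x1 x2 y1 y2 : R) :
 0 < b -> 0 <= D -> 0 < x1 -> 0 < x2 -> 0 < y1 -> 0 < y2 ->
 b*(x1+x2) <= x1 -> b*(x1+x2) <= x2 -> b*(y1+y2) <= y1 -> b*(y1+y2) <= y2 ->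
 y1 * x2 = x1 * y2 * expR (2*D) -> b * D * (x1+x2) <= `|y1 - x1| + `|y2 - x2|.
Proof.
move=> b0 D0 x10 x20 y10 y20 bx1 bx2 by1 by2 E.
set X := x1 + x2. set Y := y1 + y2.
have X0 : 0 < X by rewrite addr_gt0.
have Y0 : 0 < Y by rewrite addr_gt0.
pose p := x1 / X. pose q := y1 / Y.
have ep : 1 - p = x2 / X by rewrite /p /X; field; rewrite gt_eqF.
have eq' : 1 - q = y2 / Y by rewrite /q /Y; field; rewrite gt_eqF.
have p0 : 0 < p by rewrite divr_gt0.
have q0 : 0 < q by rewrite divr_gt0.
have p1 : 0 < 1 - p by rewrite ep divr_gt0.
have q1 : 0 < 1 - q by rewrite eq' divr_gt0.
have bp : b <= p by rewrite ler_pdivlMr.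
have bq : b <= 1 - q by rewrite eq' ler_pdivlMr.
have Eq : q * (1 - p) = p * (1 - q) * expR (2 * D).
  rewrite ep eq' /p /q.
  have -> : y1 / Y * (x2 / X) = (y1 * x2) / (X * Y) by field; rewrite !gt_eqF.
  rewrite E; field; rewrite !gt_eqF //.
have C := @core1 R _ _ _ _ p0 p1 q1 q0 bp bq b0 D0 Eq.
have H : X * `|q - p| <= `|y1 - x1| + `|y2 - x2|.
  pose a := X * q.
  have eXp : X * p = x1 by rewrite /p; field; rewrite gt_eqF.
  have eXq : X * (q - p) = a - x1 by rewrite /a -eXp; ring.
  have ->: X * `|q - p| = `|a - x1| by rewrite -eXq normrM gtr0_norm.
  have eXq1 : X - a = X * y2 / Y by rewrite /a /q /X /Y; field; rewrite gt_eqF.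
  have h1 := ler_norm (y1 - x1). have h2 := ler_norm (x1 - y1).
  have h3 := ler_norm (y2 - x2). have h4 := ler_norm (x2 - y2).
  rewrite (distrC x1 y1) in h2. rewrite (distrC x2 y2) in h4.
  have eX : X = x1 + x2 by [].
  have [YX|XY] := lerP X Y.
    have ha : a <= y1.
      by rewrite /a /q mulrA ler_pdivrMr // [X * _]mulrC ler_pM2l.
    have hc : X - a <= y2.
      by rewrite eXq1 ler_pdivrMr // [X * _]mulrC ler_pM2l.
    rewrite ler_norml; apply/andP; split; lra.
  have ha : y1 <= a.
    by rewrite /a /q mulrA ler_pdivlMr // [X * _]mulrC ler_pM2l // ltW.
  have hc : y2 <= X - a.
    by rewrite eXq1 ler_pdivlMr // [X * _]mulrC ler_pM2l // ltW.
  rewrite ler_norml; apply/andP; split; lra.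
have : b * D * X <= `|q - p| * X by rewrite ler_pM2r.
lra.
Qed.

Lemma pair_bound (R : realType) (b D x1 x2 y1 y2 : R) :
 0 < b -> 0 < x1 -> 0 < x2 -> 0 < y1 -> 0 < y2 ->
 b*(x1+x2) <= x1 -> b*(x1+x2) <= x2 -> b*(y1+y2) <= y1 -> b*(y1+y2) <= y2 ->
 y1 * x2 = x1 * y2 * expR (2*D) -> b * `|D| * (x1+x2) <= `|y1 - x1| + `|y2 - x2|.
Proof.
move=> b0 x10 x20 y10 y20 bx1 bx2 by1 by2 E.
have [D0|D0] := lerP 0 D.
  by rewrite ger0_norm //; apply: (@pair_pos R).
rewrite ltr0_norm // (addrC x1) (addrC `|y1 - x1|).
rewrite (addrC x1 x2) in bx1 bx2. rewrite (addrC y1 y2) in by1 by2.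
have D0' : 0 <= - D by rewrite oppr_ge0 ltW.
apply: (@pair_pos R b (- D) x2 x1 y2 y1) => //.
apply: (@mulIf _ (expR (2 * D))); first by rewrite gt_eqF // expR_gt0.
rewrite -[RHS]mulrA -expRD mulrN addNr expR0 mulr1.
have -> : y2 * x1 * expR (2 * D) = x1 * y2 * expR (2 * D) by ring.
by rewrite -E mulrC.
Qed.
Definition flip {V : finType} (v : V) (s : config V) : config V :=
  [ffun w => if w == v then ~~ s v else s w].

Lemma flipE {V : finType} (v w : V) (s : config V) :
  flip v s w = if w == v then ~~ s v else s w.
Proof. by rewrite ffunE. Qed.

Lemma flipK {V : finType} (v : V) : involutive (@flip V v).
Proof.
move=> s; apply/ffunP => w; rewrite !flipE eqxx.
by case: eqVneq => [->|]; rewrite ?negbK.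
Qed.

Lemma flip_inj {V : finType} (v : V) : injective (@flip V v).
Proof. exact: inv_inj (@flipK V v). Qed.

Lemma flip_ne {V : finType} (u v : V) (s : config V) :
  v != u -> flip u s v = s v.
Proof. by move=> vu; rewrite flipE (negbTE vu). Qed.

Lemma flip_at {V : finType} (v : V) (s : config V) : flip v s v = ~~ s v.
Proof. by rewrite flipE eqxx. Qed.

Lemma split_flip {R : realType} {V : finType} (P : pred (config V)) (v : V)
  (F : config V -> R) : (forall s, P (flip v s) = P s) ->
  \sum_(s | P s) F s = \sum_(s | P s && s v) (F s + F (flip v s)).
Proof.
move=> HP; rewrite (bigID (fun s : config V => s v)) /= big_split /=; congr (_ + _).
rewrite (reindex_inj (@flip_inj V v)) /=; apply: eq_bigl => s.
by rewrite HP flip_at negbK.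
Qed.

Lemma marg_v {R : realType} {V : finType} (mu : config V -> R) (b : R) (v : V)
  (s : config V) : marg_bounded mu b -> (forall t, 0 < mu t) ->
  b * (mu s + mu (flip v s)) <= mu s.
Proof.
move=> Hm mu0.
have vL : v \notin ~: [set v] by rewrite !inE eqxx.
have H := Hm _ s v (s v) vL.
rewrite /cond_marg in H.
have num : \sum_(t | agree (~: [set v]) s t && (t v == s v)) mu t = mu s.
  apply: big_pred1 => t /=.
  apply/idP/eqP => [/andP[/forall_inP A /eqP B]|->].
    apply/ffunP => w; case: (eqVneq w v) => [->//|wv]; apply/eqP; apply: A.
    by rewrite !inE wv.
  by rewrite eqxx andbT; apply/forall_inP => w _.
have den : \sum_(t | agree (~: [set v]) s t) mu t = mu s + mu (flip v s).
  rewrite (bigID (fun t : config V => t v == s v)) /= num; congr (_ + _).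
  apply: big_pred1 => t /=.
  apply/idP/eqP => [/andP[/forall_inP A B]|->].
    apply/ffunP => w; rewrite flipE; case: (eqVneq w v) => [->|wv].
      by move: B; case: (t v); case: (s v).
    by apply/eqP; apply: A; rewrite !inE wv.
  rewrite flip_at; apply/andP; split; last by case: (s v).
  by apply/forall_inP => w; rewrite !inE => wv; rewrite flip_ne.
rewrite num den ler_pdivlMr in H => //.
by rewrite addr_gt0.
Qed.
Lemma marg_uv {R : realType} {V : finType} (mu : config V -> R) (b : R) (u v : V)
  (s : config V) : marg_bounded mu b -> (forall t, 0 < mu t) -> u != v ->
  b * ((mu s + mu (flip v s)) + (mu (flip u s) + mu (flip v (flip u s))))
    <= mu s + mu (flip v s).
Proof.
move=> Hm mu0 uv.
have vu : v != u by rewrite eq_sym.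
pose L := [set w | (w != u) && (w != v)].
have uL : u \notin L by rewrite !inE eqxx.
have H := Hm _ s u (s u) uL.
rewrite /cond_marg in H.
have AL : forall t, agree L s t -> forall w, w != u -> w != v -> t w = s w.
  by move=> t /forall_inP A w wu wv; apply/eqP; apply: A; rewrite !inE wu wv.
have LA : forall t : config V, (forall w, w != u -> w != v -> t w = s w) -> agree L s t.
  by move=> t A; apply/forall_inP => w; rewrite !inE => /andP[wu wv]; rewrite A.
have ext : forall (t r : config V), (forall w, w != u -> w != v -> t w = r w) ->
    t u = r u -> t v = r v -> t = r.
  move=> t r A Au Av; apply/ffunP => w /=.
  case: (eqVneq w u) => [->//|wu]; case: (eqVneq w v) => [->//|wv]; exact: A.
have bb : forall x y : bool, (~~ (x == y)) = (x == ~~ y) by case; case.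
have num : \sum_(t | agree L s t && (t u == s u)) mu t = mu s + mu (flip v s).
  rewrite (bigID (fun t : config V => t v == s v)) /=; congr (_ + _).
    apply: big_pred1 => t /=; apply/idP/eqP => [/andP[/andP[A /eqP B] /eqP C]|->].
      by apply: ext => // w wu wv; apply: AL.
    by rewrite !eqxx !andbT; apply: LA.
  apply: big_pred1 => t /=; apply/idP/eqP => [/andP[/andP[A /eqP B] C]|->].
    apply: ext => //.
    - by move=> w wu wv; rewrite flip_ne // AL.
    - by rewrite flip_ne.
    - by rewrite flip_at; move: C; rewrite bb => /eqP.
  rewrite flip_at flip_ne // eqxx andbT bb eqxx andbT.
  by apply: LA => w wu wv; rewrite flip_ne.
have den : \sum_(t | agree L s t) mu t =
    (mu s + mu (flip v s)) + (mu (flip u s) + mu (flip v (flip u s))).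
  rewrite (bigID (fun t : config V => t u == s u)) /= num; congr (_ + _).
  rewrite (bigID (fun t : config V => t v == s v)) /=; congr (_ + _).
    apply: big_pred1 => t /=; apply/idP/eqP => [/andP[/andP[A B] /eqP C]|->].
      apply: ext => //.
      - by move=> w wu wv; rewrite flip_ne // AL.
      - by rewrite flip_at; move: B; rewrite bb => /eqP.
      - by rewrite flip_ne.
    rewrite flip_at flip_ne // eqxx andbT bb eqxx andbT.
    by apply: LA => w wu wv; rewrite flip_ne.
  apply: big_pred1 => t /=; apply/idP/eqP => [/andP[/andP[A B] C]|->].
    apply: ext => //.
    - by move=> w wu wv; rewrite !flip_ne // AL.
    - by rewrite flip_ne // flip_at; move: B; rewrite bb => /eqP.
    - by rewrite flip_at flip_ne //; move: C; rewrite bb => /eqP.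
  rewrite (flip_ne _ _ _ uv) flip_at flip_at (flip_ne _ _ _ vu) !bb !eqxx /=.
  by rewrite !andbT; apply: LA => w wu wv; rewrite !flip_ne.
rewrite num den ler_pdivlMr in H => //.
by rewrite !addr_gt0.
Qed.
Definition Lf {R : realType} {V : finType} (J : V -> V -> R) (h : V -> R) (v : V)
  (s : config V) : R := \sum_w J v w * spin R s w + h v.

Lemma sum_delta {R : realType} {V : finType} (F : V -> R) (v : V) :
  \sum_w F w * (w == v)%:R = F v.
Proof.
rewrite (bigD1 v) //= eqxx mulr1 big1 ?addr0 // => w /negbTE ->.
by rewrite mulr0.
Qed.

Lemma sum_deltal {R : realType} {V : finType} (F : V -> R) (v : V) :
  \sum_w (w == v)%:R * F w = F v.
Proof. by rewrite -(sum_delta F v); apply: eq_bigr => w _; rewrite mulrC. Qed.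

Lemma Z_gt0 {R : realType} {V : finType} (J : V -> V -> R) h (s : config V) :
  0 < \sum_t ising_weight J h t.
Proof.
rewrite (bigD1 s) //=; apply: ltr_wpDr; first by rewrite sumr_ge0 // => t _; rewrite ltW // expR_gt0.
by rewrite /ising_weight expR_gt0.
Qed.

Lemma gibbs_gt0 {R : realType} {V : finType} (J : V -> V -> R) h s :
  0 < gibbs J h s.
Proof.
rewrite /gibbs divr_gt0 //; first by rewrite /ising_weight expR_gt0.
exact: Z_gt0.
Qed.

Lemma gibbs_sum1 {R : realType} {V : finType} (J : V -> V -> R) h :
  \sum_s gibbs J h s = 1.
Proof.
rewrite /gibbs -mulr_suml divff // gt_eqF //; exact: (Z_gt0 J h [ffun=> true]).
Qed.

Lemma spin_flip_v {R : realType} {V : finType} (s : config V) (v w : V) :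
  s v = true -> spin R (flip v s) w = spin R s w - 2 * (w == v)%:R.
Proof.
move=> sv; rewrite /spin flipE; case: eqVneq => [->|_]; rewrite ?sv /=; lra.
Qed.

Lemma spin_flip {R : realType} {V : finType} (s : config V) (u w : V) :
  spin R (flip u s) w = spin R s w - 2 * spin R s u * (w == u)%:R.
Proof.
rewrite /spin flipE; case: eqVneq => [->|_]; case: (s u) => /=; lra.
Qed.

Lemma Lf_flip {R : realType} {V : finType} (J : V -> V -> R) h (u v : V) s :
  Lf J h v (flip u s) = Lf J h v s - 2 * J v u * spin R s u.
Proof.
rewrite /Lf.
rewrite (eq_bigr (fun w => J v w * spin R s w - 2 * spin R s u * (J v w * (w == u)%:R))); last first.
  by move=> w _; rewrite spin_flip; ring.
rewrite sumrB -mulr_sumr sum_delta; ring.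
Qed.
Lemma weight_flip {R : realType} {V : finType} (J : V -> V -> R) h (v : V) (s : config V) :
  (forall a c, J a c = J c a) -> J v v = 0 -> s v = true ->
  ising_weight J h s = ising_weight J h (flip v s) * expR (2 * Lf J h v s).
Proof.
move=> Js Jvv sv; rewrite /ising_weight -expRD; congr expR.
have S1 : \sum_w h w * spin R (flip v s) w = \sum_w h w * spin R s w - 2 * h v.
  rewrite (eq_bigr (fun w => h w * spin R s w - 2 * (h w * (w == v)%:R))); last first.
    by move=> w _; rewrite spin_flip_v //; ring.
  by rewrite sumrB -mulr_sumr sum_delta.
have inner : forall u, \sum_w J u w * spin R (flip v s) u * spin R (flip v s) w =
   \sum_w J u w * spin R s u * spin R s w
   - 2 * ((u == v)%:R * \sum_w J u w * spin R s w) - 2 * (J u v * spin R s u)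
   + 4 * ((u == v)%:R * J u v).
  move=> u.
  rewrite (eq_bigr (fun w => J u w * spin R s u * spin R s w
     - 2 * ((u == v)%:R * (J u w * spin R s w))
     - 2 * ((J u w * spin R s u) * (w == v)%:R)
     + 4 * ((u == v)%:R * (J u w * (w == v)%:R)))); last first.
    by move=> w _; rewrite !spin_flip_v //; ring.
  by rewrite big_split /= !sumrB -!mulr_sumr (sum_delta (fun w => J u w * spin R s u)) (sum_delta (J u)).
have S2 : \sum_u \sum_w J u w * spin R (flip v s) u * spin R (flip v s) w =
    \sum_u \sum_w J u w * spin R s u * spin R s w - 4 * \sum_w J v w * spin R s w.
  rewrite (eq_bigr _ (fun u _ => inner u)) big_split /= !sumrB -!mulr_sumr.
  rewrite (sum_deltal (fun u => \sum_w J u w * spin R s w)) (sum_deltal (fun u => J u v)) Jvv.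
  have -> : \sum_i J i v * spin R s i = \sum_w J v w * spin R s w.
    by apply: eq_bigr => u _; rewrite Js.
  ring.
by rewrite S1 S2 /Lf; field.
Qed.

Lemma gibbs_flip {R : realType} {V : finType} (J : V -> V -> R) h (v : V) (s : config V) :
  (forall a c, J a c = J c a) -> J v v = 0 -> s v = true ->
  gibbs J h s = gibbs J h (flip v s) * expR (2 * Lf J h v s).
Proof.
move=> Js Jvv sv; rewrite /gibbs (weight_flip J h v s Js Jvv sv); ring.
Qed.
Lemma bigmax_ex {R : realType} {I : finType} (F : I -> R) (t : R) :
  0 < t -> t <= \big[Num.max/0]_i F i -> exists i, t <= F i.
Proof.
move=> t0; apply: (big_rec (fun x => t <= x -> exists i, t <= F i)) => [|i x _ IH].
  by move=> h; exfalso; lra.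
by rewrite le_max => /orP[h|h]; [exists i | exact: IH].
Qed.

Lemma Jdiag {R : realType} {V : finType} (E : rel V) (J : V -> V -> R) h (v : V) :
  simple_graph E -> is_ising E J h -> J v v = 0.
Proof.
move=> [_ irr] [_ JE]; apply/eqP; apply: contraT => /JE.
by rewrite irr.
Qed.

Lemma pair_step {R : realType} {V : finType} (E : rel V) Jn Jm hn hm (b : R) (v : V) (s : config V) :
  simple_graph E -> is_ising E Jn hn -> is_ising E Jm hm -> 0 < b ->
  marg_bounded (gibbs Jn hn) b -> marg_bounded (gibbs Jm hm) b -> s v = true ->
  b * `|Lf Jn hn v s - Lf Jm hm v s| * (gibbs Jm hm s + gibbs Jm hm (flip v s))
  <= `|gibbs Jn hn s - gibbs Jm hm s| + `|gibbs Jn hn (flip v s) - gibbs Jm hm (flip v s)|.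
Proof.
move=> G In Im b0 Bn Bm sv.
have Jn0 := Jdiag _ _ _ v G In. have Jm0 := Jdiag _ _ _ v G Im.
have [Jns _] := In. have [Jms _] := Im.
apply: (@pair_bound R) => //; try exact: gibbs_gt0.
- exact: (marg_v _ _ v s Bm (gibbs_gt0 Jm hm)).
- by have := marg_v _ _ v (flip v s) Bm (gibbs_gt0 Jm hm); rewrite flipK addrC.
- exact: (marg_v _ _ v s Bn (gibbs_gt0 Jn hn)).
- by have := marg_v _ _ v (flip v s) Bn (gibbs_gt0 Jn hn); rewrite flipK addrC.
rewrite (gibbs_flip Jn hn v s Jns Jn0 sv) (gibbs_flip Jm hm v s Jms Jm0 sv).
have e : expR (2 * Lf Jm hm v s) * expR (2 * (Lf Jn hn v s - Lf Jm hm v s))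
   = expR (2 * Lf Jn hn v s) by rewrite -expRD; congr expR; ring.
rewrite -e; ring.
Qed.
Lemma tv_bound {R : realType} {V : finType} (E : rel V) Jn Jm hn hm (theta b : R) :
  simple_graph E -> is_ising E Jn hn -> is_ising E Jm hm ->
  0 < theta -> 0 < b -> b <= 1 ->
  theta <= dpar E Jn hn Jm hm ->
  marg_bounded (gibbs Jn hn) b -> marg_bounded (gibbs Jm hm) b ->
  b ^+ 2 * theta <= \sum_s `|gibbs Jn hn s - gibbs Jm hm s|.
Proof.
move=> G In Im th0 b0 b1 hd Bn Bm.
set mu := gibbs Jm hm. set nu := gibbs Jn hn.
have mu0 : forall s, 0 < mu s by move=> s; exact: gibbs_gt0.
have mu1 : \sum_s mu s = 1 by exact: gibbs_sum1.
pose G2 (v : V) (s : config V) := `|nu s - mu s| + `|nu (flip v s) - mu (flip v s)|.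
pose M (v : V) (s : config V) := mu s + mu (flip v s).
have split1 : forall v, \sum_s `|nu s - mu s| = \sum_(s : config V | true && s v) G2 v s.
  by move=> v; rewrite (split_flip (fun=> true) v (fun s => `|nu s - mu s|)).
have splitM : forall v, \sum_(s : config V | true && s v) M v s = 1.
  by move=> v; rewrite -mu1 (split_flip (fun=> true) v mu).
have [[u [v huv]]|noedge] :=
    pselect (exists u v, theta <= `|Jn u v - Jm u v|).
  have [Jns _] := In. have [Jms _] := Im.
  have hvu : theta <= `|Jn v u - Jm v u| by rewrite Jns Jms.
  have uv : u != v.
    apply/eqP => e; move: huv; rewrite e (Jdiag _ _ _ v G In) (Jdiag _ _ _ v G Im) subrr normr0.
    by move=> h; lra.
  have vu : v != u by rewrite eq_sym.
  rewrite (split1 v).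
  rewrite (split_flip (fun s => true && s v) u (G2 v)); last first.
    by move=> s /=; rewrite flip_ne.
  have step : forall s : config V, true && s v && s u ->
      2 * b ^+ 2 * theta * (M v s + M v (flip u s)) <= G2 v s + G2 v (flip u s).
    move=> s /andP[/= sv su].
    have sv' : flip u s v = true by rewrite flip_ne.
    have P1 := pair_step E Jn Jm hn hm b v _ G In Im b0 Bn Bm sv.
    have P2 := pair_step E Jn Jm hn hm b v _ G In Im b0 Bn Bm sv'.
    have K1 := marg_uv mu b u v s Bm mu0 uv.
    have K2 := marg_uv mu b u v (flip u s) Bm mu0 uv.
    rewrite flipK in K2.
    set a := `|Lf Jn hn v s - Lf Jm hm v s| in P1.
    set a' := `|Lf Jn hn v (flip u s) - Lf Jm hm v (flip u s)| in P2.
    have ha : 2 * theta <= a + a'.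
      rewrite /a /a' !Lf_flip.
      have -> : Lf Jn hn v s - 2 * Jn v u * spin R s u - (Lf Jm hm v s - 2 * Jm v u * spin R s u)
         = (Lf Jn hn v s - Lf Jm hm v s) - 2 * (Jn v u - Jm v u) * spin R s u by ring.
      have hs : `|spin R s u| = 1 by rewrite /spin; case: (s u); rewrite ?normrN normr1.
      have := lerB_dist (2 * (Jn v u - Jm v u) * spin R s u) (Lf Jn hn v s - Lf Jm hm v s).
      rewrite !normrM hs mulr1 (ger0_norm (_ : 0 <= 2)) //.
      rewrite distrC => h.
      have := normr_ge0 (Lf Jn hn v s - Lf Jm hm v s). lra.
    rewrite /M /G2.
    set X := mu s + mu (flip v s) in K1 K2 P1 *.
    set Y := mu (flip u s) + mu (flip v (flip u s)) in K1 K2 P2 *.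
    rewrite addrC in K2.
    have a0 : 0 <= a by apply: normr_ge0.
    have a0' : 0 <= a' by apply: normr_ge0.
    have X0 : 0 < X by rewrite addr_gt0.
    have Y0 : 0 < Y by rewrite addr_gt0.
    have h1 : b * a * (b * (X + Y)) <= b * a * X by rewrite ler_wpM2l // mulr_ge0 // ltW.
    have h2 : b * a' * (b * (X + Y)) <= b * a' * Y by rewrite ler_wpM2l // mulr_ge0 // ltW.
    have h3 : 2 * theta * (b ^+ 2 * (X + Y)) <= (a + a') * (b ^+ 2 * (X + Y)).
      by rewrite ler_wpM2r // mulr_ge0 ?exprn_ge0 ?addr_ge0 // ltW.
    have e1 : b * a * (b * (X + Y)) + b * a' * (b * (X + Y)) = (a + a') * (b ^+ 2 * (X + Y)) by ring.
    have e2 : 2 * b ^+ 2 * theta * (X + Y) = 2 * theta * (b ^+ 2 * (X + Y)) by ring.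
    lra.
  have : \sum_(s : config V | true && s v && s u) 2 * b ^+ 2 * theta * (M v s + M v (flip u s))
     <= \sum_(s : config V | true && s v && s u) (G2 v s + G2 v (flip u s)).
    by apply: ler_sum.
  rewrite -mulr_sumr -(split_flip (fun s => true && s v) u (M v)); last first.
    by move=> s /=; rewrite flip_ne.
  rewrite splitM mulr1 => h.
  apply: le_trans h.
  have : 0 <= b ^+ 2 * theta by rewrite mulr_ge0 ?exprn_ge0 // ltW.
  lra.
have hJ : forall u w, `|Jn u w - Jm u w| < theta.
  move=> u w; rewrite ltNge; apply/negP => h; apply: noedge; by exists u, w.
have : theta <= \big[Num.max/0]_v (`|hn v - hm v| / (deg E v).+1%:R).
  move: hd; rewrite /dpar le_max => /orP[h|//].
  have [u hu] := bigmax_ex _ _ th0 h; have [w hw] := bigmax_ex _ _ th0 hu.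
  by have := hJ u w; lra.
move=> /(bigmax_ex _ _ th0) [v hv].
rewrite ler_pdivlMr // in hv.
have hD : forall s : config V, theta <= `|Lf Jn hn v s - Lf Jm hm v s|.
  move=> s.
  have eD : Lf Jn hn v s - Lf Jm hm v s =
     (hn v - hm v) + \sum_w (Jn v w - Jm v w) * spin R s w.
    have -> : \sum_w (Jn v w - Jm v w) * spin R s w =
        \sum_w Jn v w * spin R s w - \sum_w Jm v w * spin R s w.
      by rewrite -sumrB; apply: eq_bigr => w _; ring.
    rewrite /Lf; ring.
  rewrite eD.
  have h1 := lerB_normD (hn v - hm v) (\sum_w (Jn v w - Jm v w) * spin R s w).
  have h2 : `|\sum_w (Jn v w - Jm v w) * spin R s w| <= theta * (deg E v)%:R.
    apply: le_trans (ler_norm_sum _ _ _) _.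
    rewrite (bigID (fun w => w \in [set u | E v u])) /=.
    rewrite [X in _ + X]big1; last first.
      move=> w; rewrite inE => nE.
      have [_ En] := In. have [_ Em] := Im.
      have -> : Jn v w = 0 by apply/eqP; apply: contraNT nE => /En.
      have -> : Jm v w = 0 by apply/eqP; apply: contraNT nE => /Em.
      by rewrite subrr mul0r normr0.
    rewrite addr0.
    apply: le_trans (_ : \sum_(w in [set u | E v u]) theta <= _).
      apply: ler_sum => w _.
      rewrite normrM (_ : `|spin R s w| = 1); last first.
        by rewrite /spin; case: (s w); rewrite ?normrN normr1.
      by rewrite mulr1 ltW.
    by rewrite sumr_const /deg mulr_natr.
  rewrite -natr1 mulrDr mulr1 in hv.
  lra.
rewrite (split1 v).
have hbm : b ^+ 2 * theta <= b * theta * \sum_(s : config V | true && s v) M v s.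
  rewrite splitM mulr1 expr2 -mulrA.
  by rewrite ger_pMl // mulr_gt0.
apply: le_trans hbm _.
rewrite mulr_sumr; apply: ler_sum => s /= sv.
apply: le_trans (pair_step E Jn Jm hn hm b v _ G In Im b0 Bn Bm sv).
rewrite /M; apply: ler_wpM2r; first by rewrite addr_ge0 // ltW.
apply: ler_wpM2l; [exact: ltW | exact: hD].
Qed.
Lemma pointwise (R : realType) (al s r : R) : 1 <= al -> 0 < s -> 0 <= r ->
  (r + 1) `^ al <= (s + 2) `^ al + ((s + 2) / s) `^ al * `|r - 1| `^ al.
Proof.
move=> al1 s0 r0.
have al0 : 0 <= al by apply: le_trans al1; exact: ler01.
have hn := ler_norm (r - 1).
have hn' := normr_ge0 (r - 1).
have hK : 0 <= ((s + 2) / s) `^ al * `|r - 1| `^ al by rewrite mulr_ge0 // powR_ge0.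
have hP : 0 <= (s + 2) `^ al by rewrite powR_ge0.
have [le|lt] := lerP `|r - 1| s.
  have h : (r + 1) `^ al <= (s + 2) `^ al.
    apply: (ge0_ler_powR al0); rewrite ?nnegrE; lra.
  lra.
have h1 : r + 1 <= (s + 2) / s * `|r - 1|.
  have -> : (s + 2) / s * `|r - 1| = `|r - 1| + 2 * (`|r - 1| / s).
    by field; rewrite gt_eqF.
  have : 1 <= `|r - 1| / s by rewrite ler_pdivlMr // mul1r ltW.
  lra.
have h : (r + 1) `^ al <= ((s + 2) / s * `|r - 1|) `^ al.
  apply: (ge0_ler_powR al0); rewrite ?nnegrE //; try lra.
have hs2 : 0 <= (s + 2) / s by rewrite divr_ge0 // ltW //; lra.
rewrite (powRM _ hs2 hn') in h.
lra.
Qed.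

Lemma jensen_like (R : realType) (V : finType) (mu x : config V -> R) (al tau : R) :
  1 <= al -> 0 < tau -> (forall s, 0 <= mu s) -> (forall s, 0 <= x s) ->
  \sum_s mu s = 1 -> tau <= \sum_s mu s * x s ->
  tau `^ al <= \sum_s mu s * x s `^ al.
Proof.
move=> al1 tau0 mu0 x0 mu1 hT.
have al0 : 0 < al by apply: lt_le_trans al1; exact: ltr01.
have h : \sum_s mu s * (al * tau `^ (al - 1) * x s - (al - 1) * tau `^ al)
    <= \sum_s mu s * x s `^ al.
  by apply: ler_sum => s _; apply: ler_wpM2l => //; apply: tangent_powR.
have e : \sum_s mu s * (al * tau `^ (al - 1) * x s - (al - 1) * tau `^ al)
    = al * tau `^ (al - 1) * \sum_s mu s * x s - (al - 1) * tau `^ al * \sum_s mu s.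
  rewrite !mulr_sumr -sumrB; apply: eq_bigr => s _; ring.
rewrite e mu1 mulr1 in h.
have ht : tau * tau `^ (al - 1) = tau `^ al by rewrite mulr_powRB1 // ltW.
have hp : 0 <= al * tau `^ (al - 1) by rewrite mulr_ge0 ?powR_ge0 // ltW.
have : al * tau `^ (al - 1) * tau <= al * tau `^ (al - 1) * \sum_s mu s * x s.
  by apply: ler_wpM2l.
have -> : al * tau `^ (al - 1) * tau = al * tau `^ al by rewrite -ht; ring.
lra.
Qed.
Theorem lemma2p3 (R : realType) (V : finType) (E : rel V)
  (Jn Jm : V -> V -> R) (hn hm : V -> R) (alpha theta b : R) :
  simple_graph E ->
  is_ising E Jn hn -> is_ising E Jm hm ->
  1 <= alpha -> 0 < theta -> theta <= 1 -> 0 < b -> b <= 1 ->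
  theta <= dpar E Jn hn Jm hm ->
  marg_bounded (gibbs Jn hn) b -> marg_bounded (gibbs Jm hm) b ->
  Bconst alpha b theta *
    (\sum_(s : config V) gibbs Jm hm s * (gibbs Jn hn s / gibbs Jm hm s + 1) `^ alpha)
  <= chi_div alpha (gibbs Jn hn) (gibbs Jm hm).
Proof.
move=> G In Im al1 th0 th1 b0 b1 hd Bn Bm.
have hT0 := tv_bound E Jn Jm hn hm theta b G In Im th0 b0 b1 hd Bn Bm.
rewrite /Bconst; cbv zeta.
set mu := gibbs Jm hm. set nu := gibbs Jn hn.
rewrite -/mu -/nu in hT0.
set al := alpha.
have al0 : 0 < al by apply: lt_le_trans al1; exact: ltr01.
have mu0 : forall s, 0 < mu s by move=> s; exact: gibbs_gt0.
have mu1 : \sum_s mu s = 1 by exact: gibbs_sum1.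
have nu0 : forall s, 0 <= nu s by move=> s; apply: ltW; exact: gibbs_gt0.
pose x s := `|nu s / mu s - 1|.
have emx : forall s, mu s * x s = `|nu s - mu s|.
  move=> s; have -> : nu s - mu s = mu s * (nu s / mu s - 1).
    by field; rewrite gt_eqF.
  by rewrite normrM gtr0_norm.
set tau := b ^+ 2 * theta.
have tau0 : 0 < tau by rewrite mulr_gt0 ?exprn_gt0.
have hT : tau <= \sum_s mu s * x s.
  by rewrite (eq_bigr _ (fun s _ => emx s)).
have HJ := @jensen_like R V mu x al tau al1 tau0 (fun s => ltW (mu0 s)) (fun s => normr_ge0 _) mu1 hT.
set Dv := chi_div al nu mu.
have eD : Dv = 2^-1 * \sum_s mu s * x s `^ al.
  by rewrite /Dv /chi_div mulr_sumr; apply: eq_bigr => s _; rewrite /x; ring.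
set a := b `^ (2 * al) * theta `^ al / 2.
have ea : a = 2^-1 * tau `^ al.
  rewrite /a /tau powRM ?exprn_ge0 ?ltW // powRrM -(powR_mulrn 2 (ltW b0)).
  by rewrite mulrC.
have aD : a <= Dv by rewrite ea eD ler_wpM2l.
have a0 : 0 < a by rewrite ea mulr_gt0 ?invr_gt0 ?powR_gt0.
set s := a `^ (1 / (al + 1)).
have s0 : 0 < s by rewrite powR_gt0.
set S := s `^ al.
have S0 : 0 < S by rewrite powR_gt0.
have Ss : S * s = a.
  rewrite /S -{2}(powRr1 (ltW s0)) -powRD; last by apply/implyP => _; rewrite gt_eqF.
  rewrite /s -powRrM.
  have -> : 1 / (al + 1) * (al + 1) = 1 by field; rewrite gt_eqF // addr_gt0.
  by rewrite powRr1 // ltW.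
set P := (s + 2) `^ al.
have P0 : 0 < P by rewrite powR_gt0 // addr_gt0.
rewrite powRN -/P.
have eK : ((s + 2) / s) `^ al = P / S.
  rewrite powRM ?invr_ge0 ?ltW ?addr_gt0 // -/P.
  have h : s^-1 `^ al * S = 1.
    by rewrite /S -powRM ?invr_ge0 ?ltW // mulVf ?gt_eqF // powR1.
  congr (_ * _); apply: (@mulIf _ S); first by rewrite gt_eqF.
  by rewrite h mulVf // gt_eqF.
have hR : \sum_s mu s * (nu s / mu s + 1) `^ al <= P + P / S * (2 * Dv).
  apply: le_trans (_ : \sum_s mu s * (P + P / S * x s `^ al) <= _).
    apply: ler_sum => t _; apply: ler_wpM2l; first exact: ltW.
    rewrite -eK; apply: pointwise => //.
    by rewrite divr_ge0 // ltW.
  rewrite (eq_bigr (fun t => P * mu t + P / S * (mu t * x t `^ al))); last first.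
    by move=> t _; ring.
  rewrite big_split /= -!mulr_sumr mu1 eD mulr1 [2 * (2^-1 * _)]mulrA mulfV ?mul1r //.
have h2s : 0 < 2 * s + 1 by rewrite addr_gt0 // mulr_gt0.
have B0 : 0 <= a * P^-1 * (2 * s + 1)^-1.
  apply: mulr_ge0; [apply: mulr_ge0; [exact: ltW | by rewrite invr_ge0 ltW] | by rewrite invr_ge0 ltW].
apply: le_trans (ler_wpM2l B0 hR) _.
have e2 : a * P^-1 * (2 * s + 1)^-1 * (P + P / S * (2 * Dv))
    = (a + 2 * Dv * s) / (2 * s + 1).
  rewrite -Ss; field.
  by rewrite !gt_eqF // ?addr_gt0 // mulr_gt0.
rewrite e2 ler_pdivrMr; last by rewrite addr_gt0 // mulr_gt0.
lra.
Qed.
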